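(* Let $G$ be a simple 3-connected graph with $n\geq 5$ vertices in which every vertex has degree at most $4$. Then one can add edges (but no vertices) to $G$ so that the resulting multigraph $G'$ has the following properties: - $G'$ is 3-connected; - $G'$ is 4-regular; - $G'$ has no loops; - $G'$ has at most one double edge. That is, at most one pair of vertices is joined by more than one edge, and such a pair is joined by exactly two edges.
   Context: A (multi)graph is 3-connected if it has more than $3$ vertices and, for any two vertices $u,v$, the graph obtained by deleting $u$ and $v$ is connected. A graph is 4-regular if every vertex has degree exactly $4$, with degrees counted with edge multiplicity. *)

(* Defs.v *)
From mathcomp Require Import all_boot.
Set Implicit Arguments. Unset Strict Implicit. Unset Printing Implicit Defensive.

(* A (multi)graph on a finite vertex type T is described by its adjacency
   relation adj (for a multigraph: "joined by at least one edge").
   3-connected: more than 3 vertices, and for any two vertices u, v, the graph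
   obtained by deleting u and v is connected (any two remaining vertices are
   joined by a path avoiding u and v). *)
Definition three_connected (T : finType) (adj : rel T) : Prop :=
  3 < #|T| /\
  forall u v x y : T, x != u -> x != v -> y != u -> y != v ->
    connect (fun a b => [&& a != u, a != v, b != u, b != v & adj a b]) x y.

Definition simple_graph (T : finType) (e : rel T) : Prop :=
  symmetric e /\ irreflexive e.

Definition sdeg (T : finType) (e : rel T) (x : T) : nat := #|[set y | e x y]|.

(* A multigraph on T is given by edge multiplicities m x y (number of edges
   joining x and y); m x x counts loops. *)
Definition multigraph_adj (T : finType) (m : T -> T -> nat) : rel T :=
  fun a b => 0 < m a b.

Definition mdeg (T : finType) (m : T -> T -> nat) (x : T) : nat :=
  \sum_(y : T) m x y.

(* Main.v *)
Require Import Defs.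
From mathcomp Require Import all_boot zify.
Set Implicit Arguments. Unset Strict Implicit.

Lemma card_sumb (T : finType) (P : pred T) : #|[set x | P x]| = \sum_x (P x : nat).
Proof.
rewrite -sum1_card big_mkcond /=; apply: eq_bigr => x _; rewrite inE; by case: (P x).
Qed.

Lemma sum_eq1 (T : finType) (b : T) : \sum_(y : T) ((y == b) : nat) = 1.
Proof.
rewrite (bigD1 b) //= eqxx big1 // => y /negbTE -> //.
Qed.

Definition madd (T : finType) (m : T -> T -> nat) (a b : T) : T -> T -> nat :=
  fun x y => m x y + (((x == a) && (y == b)) || ((x == b) && (y == a))).

Lemma mdeg_madd (T : finType) (m : T -> T -> nat) a b z : a != b ->
  mdeg (madd m a b) z = mdeg m z + (z == a) + (z == b).
Proof.
move=> ab; rewrite /mdeg /madd big_split /= -addnA; congr (_ + _).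
case: (eqVneq z a) => [za|za]; first subst z.
  rewrite (negbTE ab) /=.
  rewrite (eq_bigr (fun y => ((y == b) : nat))) ?sum_eq1 // => y _; by rewrite orbF.
case: (eqVneq z b) => [zb|zb] /=; first subst z.
  by rewrite add0n (eq_bigr (fun y => ((y == a) : nat))) ?sum_eq1.
by rewrite big1.
Qed.

Lemma deg_ge (T : finType) (m : T -> T -> nat) a (S : {set T}) :
  (forall y, y \in S -> 1 <= m a y) -> #|S| <= mdeg m a.
Proof.
move=> H; rewrite -sum1_card /mdeg.
apply: (@leq_trans (\sum_(y in S) m a y)); first by apply: leq_sum.
rewrite [X in _ <= X](bigID (fun y => y \in S)) /=; exact: leq_addr.
Qed.

Lemma handshake (T : finType) (m : T -> T -> nat) :
  (forall x y, m x y = m y x) -> (forall x, m x x = 0) ->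
  ~~ odd (\sum_x mdeg m x).
Proof.
move=> Hs Hl; rewrite /mdeg.
have -> : \sum_x \sum_y m x y = \sum_x \sum_y
   ((enum_rank x < enum_rank y) * m x y + (enum_rank y < enum_rank x) * m x y).
  apply: eq_bigr => x _; apply: eq_bigr => y _.
  case: (eqVneq x y) => [->|xy]; first by rewrite Hl !muln0.
  have : enum_rank x != enum_rank y by apply: contra xy => /eqP /enum_rank_inj ->.
  rewrite -mulnDl => Hne; case: ltngtP Hne => [_ _|_ _|E /eqP []]; last exact: val_inj; by rewrite /= ?add0n ?addn0 mul1n.
rewrite (eq_bigr _ (fun x _ => big_split _ _ _ _ _)) /=.
rewrite big_split /= exchange_big /=.
rewrite [X in X + _](eq_bigr (fun y => \sum_x (enum_rank x < enum_rank y) * m y x));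
  last by move=> y _; apply: eq_bigr => x _; rewrite Hs.
by rewrite addnn odd_double.
Qed.

Lemma tc_mono (T : finType) (e r : rel T) :
  three_connected e -> (forall a b, e a b -> r a b) -> three_connected r.
Proof.
case=> Hc Hk Her; split=> // u v x y xu xv yu yv.
apply: connect_sub (Hk u v x y xu xv yu yv) => a b /and5P[h1 h2 h3 h4 /Her h5].
by apply: connect1; rewrite /= h1 h2 h3 h4 h5.
Qed.

Lemma path_closed (T : finType) (r : rel T) (A : {set T}) :
  (forall a b, a \in A -> r a b -> b \in A) ->
  forall p a, a \in A -> path r a p -> last a p \in A.
Proof.
move=> H; elim=> [|b p IH] a Ha //= /andP[rab Hp].
exact: IH (H _ _ Ha rab) Hp.
Qed.

Lemma nth_cases (T : eqType) (z : T) (s : seq T) i : nth z s i \in s \/ nth z s i = z.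
Proof. case: (ltnP i (size s)) => [/(mem_nth z)|/(nth_default z)]; by [left|right]. Qed.

Lemma mindeg (T : finType) (e : rel T) : simple_graph e -> 5 <= #|T| ->
  three_connected e -> forall x, 3 <= sdeg e x.
Proof.
move=> [Hs Hi] H5 [_ Hc] x; rewrite leqNgt; apply/negP => Hd.
set N := [set y | e x y].
have HN : #|N| <= 2 by move: Hd; rewrite /sdeg -/N; lia.
set C := ~: (x |: N).
have HC : 2 <= #|C|.
  have := cardsC (x |: N); rewrite -/C cardsU1; have := leq_b1 (x \notin N); lia.
have [y Hy] : exists y, y \in C by apply/card_gt0P; lia.
have [z Hz] : exists z, z \in C :\ y.
  apply/card_gt0P; have := cardsD1 y C; rewrite Hy; lia.
have {}Hz : z != y /\ z \in C by move: Hz; rewrite !inE => /andP[-> ->].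
set s := enum N.
have Hsz : size s <= 2 by rewrite /s -cardE.
set u := nth z s 0; set v := nth z s 1.
have Hcov : forall w, w \in N -> w = u \/ w = v.
  move=> w; rewrite -mem_enum -/s => ws.
  have := index_mem w s; rewrite ws => Hi'.
  have Hn := nth_index z ws.
  case E: (index w s) Hn => [|[|n]] Hn; [left|right|]; rewrite -Hn ?E //.
  rewrite E in Hi'; by have := leq_trans Hi' Hsz.
have Hgood : forall t, (t = u \/ t = v) -> t != x /\ t != y.
  have Hm : forall w, w \in s \/ w = z -> w != x /\ w != y.
    move=> w [|->].
      rewrite mem_enum inE => exw; split.
        by apply: contraTneq exw => ->; rewrite Hi.
      by apply: contraTneq Hy => <-; rewrite !inE exw orbT.
    case: Hz => zy; rewrite !inE negb_or => /andP[zx _]; by rewrite zy zx.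
  move=> t [->|->]; apply: Hm; exact: nth_cases.
have [ux uy] := Hgood u (or_introl erefl).
have [vx vy] := Hgood v (or_intror erefl).
have := Hc u v x y; rewrite eq_sym ux eq_sym vx eq_sym uy eq_sym vy.
move=> /(_ isT isT isT isT) /connectP[[|b p]] /=.
  move=> _ yx; move: Hy; rewrite yx !inE eqxx //.
move=> /andP[/and5P[_ _ bu bv exb] _] _.
have : b \in N by rewrite inE.
move=> /Hcov [] E; [move: bu|move: bv]; by rewrite E eqxx.
Qed.

Definition Dset (T : finType) (m : T -> T -> nat) := [set x | mdeg m x < 4].

Definition minv (T : finType) (e : rel T) (m : T -> T -> nat) :=
  [/\ (forall x y, m x y = m y x), (forall x, m x x = 0),
      (forall x y, m x y <= 1), (forall x y, e x y -> 1 <= m x y) &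
      (forall x, 3 <= mdeg m x <= 4)].

Lemma Deven (T : finType) (e : rel T) m : minv e m -> ~~ odd #|Dset m|.
Proof.
case=> Hs Hl _ _ Hd.
have E : \sum_x mdeg m x + #|Dset m| = #|T| * 4.
  rewrite /Dset (card_sumb (fun x => mdeg m x < 4)) -big_split /= -sum_nat_const.
  apply: eq_bigr => x _; have := Hd x; case: ltngtP => //=; lia.
have := handshake Hs Hl; have := congr1 odd E; rewrite oddD oddM andbF.
by case: (odd _); case: (odd _).
Qed.

Lemma step (T : finType) (e : rel T) m : simple_graph e -> 5 <= #|T| ->
  three_connected e -> minv e m -> 3 <= #|Dset m| ->
  exists x y, [/\ x \in Dset m, y \in Dset m, x != y & m x y = 0].
Proof.
move=> [Hs Hi] H5 [_ Hc] Hinv Hk.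
have Hev := Deven Hinv.
case: Hinv => Hms Hml Hm1 Hme Hmd.
case: (boolP [exists x, exists y, [&& x \in Dset m, y \in Dset m, x != y & m x y == 0]]).
  by move=> /existsP[x /existsP[y /and4P[? ? ? /eqP ?]]]; exists x, y.
move=> /existsPn Hno; exfalso.
have Hcl : forall x y, x \in Dset m -> y \in Dset m -> x != y -> 1 <= m x y.
  move=> x y Hx Hy xy; have := Hno x => /existsPn /(_ y).
  by rewrite Hx Hy xy /= lt0n.
have Hk4 : 4 <= #|Dset m|.
  have : #|Dset m| != 3 by apply: contraNneq Hev => ->.
  lia.
have [a Ha] : exists a, a \in Dset m by apply/card_gt0P; lia.
have Hda : mdeg m a < 4 by move: Ha; rewrite inE.
have Hcard1 := cardsD1 a (Dset m); rewrite Ha in Hcard1.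
have HS : #|Dset m :\ a| <= mdeg m a.
  apply: deg_ge => w; rewrite in_setD1 => /andP[wa wD]; apply: Hcl => //.
  by rewrite eq_sym.
have Hk4e : #|Dset m| = 4 by lia.
have Hclo2 : forall b z, b \in Dset m -> e b z -> z \in Dset m.
  move=> b z Hb ez; apply/negPn/negP => zD.
  have Hdb : mdeg m b < 4 by move: Hb; rewrite inE.
  have Hcb := cardsD1 b (Dset m); rewrite Hb in Hcb.
  have : #|z |: (Dset m :\ b)| <= mdeg m b.
    apply: deg_ge => w; rewrite in_setU1 in_setD1 => /orP[/eqP ->|/andP[wb wD]]; first exact: Hme.
    by apply: Hcl => //; rewrite eq_sym.
  rewrite cardsU1 in_setD1 (negbTE zD) andbF /=; lia.
have [y Hy] : exists y, y \in ~: Dset m.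
  apply/card_gt0P; have := cardsC (Dset m); lia.
have [u Hu] : exists u, u \in ~: [set a; y].
  apply/card_gt0P; have := cardsC [set a; y]; have := cards2 a y; have := leq_b1 (a != y); lia.
move: Hu; rewrite !inE negb_or => /andP[ua uy].
have := Hc u u a y; rewrite !(eq_sym _ u) ua uy => /(_ isT isT isT isT) /connectP[p Hp Hy'].
have := @path_closed _ _ (Dset m) _ p a Ha Hp.
rewrite -Hy'; move: Hy; rewrite inE => /negbTE -> //.
move=> H; suff: false by []; apply: H => b z Hb /and5P[_ _ _ _]; exact: Hclo2.
Qed.

Lemma madd_sym (T : finType) (m : T -> T -> nat) a b :
  (forall x y, m x y = m y x) -> forall x y, madd m a b x y = madd m a b y x.
Proof.
move=> Hs x y; rewrite /madd Hs; congr (_ + _).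
by rewrite orbC [(y == a) && _]andbC [(y == b) && _]andbC.
Qed.

Lemma madd_loop (T : finType) (m : T -> T -> nat) a b :
  a != b -> (forall x, m x x = 0) -> forall x, madd m a b x x = 0.
Proof.
move=> ab Hl x; rewrite /madd Hl.
case: (eqVneq x a) => [xa|xa]; first by subst x; rewrite (negbTE ab) /= ?andbF ?eqxx.
rewrite /=; case: (x == b); by rewrite ?andbF ?andbT ?orbF /=; apply/eqP; rewrite eq_sym.
Qed.

Lemma madd_ind (T : finType) (m : T -> T -> nat) a b x y :
  madd m a b x y != m x y -> (x = a /\ y = b) \/ (x = b /\ y = a).
Proof.
rewrite /madd; case: (boolP (_ || _)) => [/orP[/andP[/eqP -> /eqP ->]|/andP[/eqP -> /eqP ->]]|]; 
  [by left|by right|by rewrite addn0 eqxx].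
Qed.

Definition goal (T : finType) (e : rel T) (m : T -> T -> nat) :=
    (forall x y : T, m x y = m y x) /\
    (forall x : T, m x x = 0) /\
    (forall x y : T, e x y -> 1 <= m x y) /\
    three_connected (multigraph_adj m) /\
    (forall x : T, mdeg m x = 4) /\
    (forall x y : T, m x y <= 2) /\
    (forall x y u v : T, m x y = 2 -> m u v = 2 ->
       (u = x /\ v = y) \/ (u = y /\ v = x)).

Lemma main (T : finType) (e : rel T) : simple_graph e -> 5 <= #|T| ->
  three_connected e -> forall k m, minv e m -> #|Dset m| = k -> exists m', goal e m'.
Proof.
move=> Hsg H5 H3c; elim/ltn_ind => k IH m Hinv Hk.
have Hev := Deven Hinv.
case: (Hinv) => Hms Hml Hm1 Hme Hmd.
have Htc : forall m', (forall x y, m x y <= m' x y) -> three_connected (multigraph_adj m').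
  move=> m' Hle; apply: tc_mono H3c _ => a b /Hme h; rewrite /multigraph_adj.
  exact: leq_trans h (Hle a b).
case: (ltnP k 3) => Hk3.
  have Ho : ~~ odd k by rewrite -Hk.
  have : k = 0 \/ k = 2 by move: Ho Hk3; clear; case: k => [|[|[|k]]] //= _ _; auto.
  case=> Hk0.
    exists m; split=> //; split=> //; split=> //; split; first by apply: Htc.
    split.
      move=> x; have := Hmd x; have : x \notin Dset m.
        apply/negP => Hx; have : 0 < #|Dset m| by apply/card_gt0P; exists x.
        by rewrite Hk Hk0.
      rewrite inE; lia.
    split; first by move=> x y; exact: leq_trans (Hm1 x y) _.
    by move=> x y u v; have := Hm1 x y; lia.
  move: (Hk); rewrite Hk0 => /eqP /cards2P[a [b [ab HD]]].
  have Ha : a \in Dset m by rewrite HD !inE eqxx.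
  have Hb : b \in Dset m by rewrite HD !inE eqxx orbT.
  have Hdd : forall x y, madd m a b x y = 2 -> (x = a /\ y = b) \/ (x = b /\ y = a).
    move=> x y H2; apply: (@madd_ind _ m a b x y); rewrite H2; have := Hm1 x y; case: (m x y) => [|[|]] //.
  exists (madd m a b); split; first exact: madd_sym.
  split; first exact: madd_loop.
  split; first by move=> x y /Hme h; rewrite /madd; lia.
  split; first by apply: Htc => x y; rewrite /madd; lia.
  split.
    move=> x; rewrite mdeg_madd //; have := Hmd x.
    case: (eqVneq x a) => [->|xa]; first by move: Ha; rewrite inE (negbTE ab) /=; lia.
    case: (eqVneq x b) => [->|xb]; first by move: Hb; rewrite inE /=; lia.
    have : x \notin Dset m by rewrite HD !inE negb_or xa xb.
    rewrite inE /=; lia.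
  split; first by move=> x y; have := Hm1 x y; rewrite /madd; case: (_ || _) => /=; lia.
  move=> x y u v /Hdd [[-> ->]|[-> ->]] /Hdd [[-> ->]|[-> ->]]; by [left|right].
have [x [y [Hx Hy xy Hxy]]] := step Hsg H5 H3c Hinv (eq_ind_r (fun n => 2 < n) Hk3 Hk).
have Hyx : m y x = 0 by rewrite Hms.
have Hinv' : minv e (madd m x y).
  split.
  - exact: madd_sym.
  - exact: madd_loop.
  - move=> a b; case: (eqVneq (madd m x y a b) (m a b)) => [->|/madd_ind]; first exact: Hm1.
    by case=> [[-> ->]|[-> ->]]; rewrite /madd ?Hxy ?Hyx !eqxx //= ?orbT.
  - by move=> a b /Hme h; rewrite /madd; lia.
  - move=> z; rewrite mdeg_madd //; have := Hmd z.
    case: (eqVneq z x) => [->|zx]; first by move: Hx; rewrite inE (negbTE xy) /=; lia.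
    case: (eqVneq z y) => [->|zy]; first by move: Hy; rewrite inE /=; lia.
    rewrite /=; lia.
have HD' : Dset (madd m x y) = (Dset m :\ x) :\ y.
  apply/setP => z; rewrite !inE mdeg_madd //.
  case: (eqVneq z y) => [->|zy] /=; first by rewrite eq_sym (negbTE xy) /=; apply/negbTE; have := Hmd y; lia.
  case: (eqVneq z x) => [->|zx] /=; first by have := Hmd x; lia.
  by rewrite !addn0.
apply: (IH _ _ _ Hinv' erefl).
have := cardsD1 x (Dset m); have := cardsD1 y (Dset m :\ x).
rewrite HD' Hx in_setD1 eq_sym xy Hy /=; lia.
Qed.

Theorem lemma1 (T : finType) (e : rel T) :
  simple_graph e ->
  5 <= #|T| ->
  three_connected e ->
  (forall x : T, sdeg e x <= 4) ->
  exists m : T -> T -> nat,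
    (* m is a (loopless) multigraph on the same vertex set *)
    (forall x y : T, m x y = m y x) /\
    (forall x : T, m x x = 0) /\
    (* G' is obtained from G by adding edges *)
    (forall x y : T, e x y -> 1 <= m x y) /\
    (* G' is 3-connected *)
    three_connected (multigraph_adj m) /\
    (* G' is 4-regular *)
    (forall x : T, mdeg m x = 4) /\
    (* at most one pair joined by more than one edge, and by exactly two *)
    (forall x y : T, m x y <= 2) /\
    (forall x y u v : T, m x y = 2 -> m u v = 2 ->
       (u = x /\ v = y) \/ (u = y /\ v = x)).
Proof.
move=> Hsg H5 H3c Hdeg.
pose m0 := fun x y => (e x y : nat).
have Hinv : minv e m0.
  case: (Hsg) => Hs Hi; split.
  - by move=> x y; rewrite /m0 Hs.
  - by move=> x; rewrite /m0 Hi.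
  - by move=> x y; exact: leq_b1.
  - by move=> x y; rewrite /m0 => ->.
  - move=> x; have -> : mdeg m0 x = sdeg e x by rewrite /mdeg /sdeg card_sumb.
    by rewrite Hdeg (mindeg Hsg H5 H3c).
have [m' Hm'] := main Hsg H5 H3c Hinv erefl.
by exists m'.
Qed.
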